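(* Let $f:X\to Y$ be an open, $SC^*$-irresolute bijection between topological spaces. If $I\subseteq Y$ is $gSC^*$-closed, then $f^{-1}(I)$ is $gSC^*$-closed in $X$.
   Context: For $A\subseteq Z$ in a topological space $Z$: $A$ is semi-open if $A\subseteq cl(int(A))$, semi-closed if its complement is semi-open; $scl(A)$ is the smallest semi-closed set containing $A$. $A$ is $c^*$-open if $int(cl(A))\subseteq A\subseteq cl(int(A))$. $A$ is $SC^*$-closed if $scl(A)\subseteq U$ whenever $A\subseteq U$ and $U$ is $c^*$-open; $A$ is $SC^*$-open if $Z\setminus A$ is $SC^*$-closed. $SC^*\text{-}cl(A)$ is the intersection of all $SC^*$-closed sets containing $A$. $A$ is $gSC^*$-closed if $SC^*\text{-}cl(A)\subseteq U$ whenever $A\subseteq U$ and $U$ is open. $f$ is $SC^*$-irresolute if $f^{-1}(N)$ is $SC^*$-open in $X$ for every $SC^*$-open $N\subseteq Y$. *)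

(* Defs.v *)
From HB Require Import structures.
From mathcomp Require Import all_boot all_order.
From mathcomp Require Import all_classical all_reals.
From mathcomp Require Import topology.
Set Implicit Arguments. Unset Strict Implicit. Unset Printing Implicit Defensive.
Local Open Scope classical_set_scope.

Section SCstar.
Context {Z : topologicalType}.

Definition semi_open (A : set Z) : Prop := A `<=` closure (interior A).
Definition semi_closed (A : set Z) : Prop := semi_open (~` A).
Definition scl (A : set Z) : set Z :=
  \bigcap_(F in [set F | semi_closed F /\ A `<=` F]) F.
Definition cstar_open (A : set Z) : Prop :=
  interior (closure A) `<=` A /\ A `<=` closure (interior A).
Definition SCstar_closed (A : set Z) : Prop :=
  forall U : set Z, A `<=` U -> cstar_open U -> scl A `<=` U.
Definition SCstar_open (A : set Z) : Prop := SCstar_closed (~` A).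
Definition SCstar_cl (A : set Z) : set Z :=
  \bigcap_(F in [set F | SCstar_closed F /\ A `<=` F]) F.
Definition gSCstar_closed (A : set Z) : Prop :=
  forall U : set Z, A `<=` U -> open U -> SCstar_cl A `<=` U.
End SCstar.

Definition SCstar_irresolute {X Y : topologicalType} (f : X -> Y) : Prop :=
  forall N : set Y, SCstar_open N -> SCstar_open (f @^-1` N).

Definition open_map {X Y : topologicalType} (f : X -> Y) : Prop :=
  forall U : set X, open U -> open (f @` U).

(* Main.v *)
Require Import Defs.
From mathcomp Require Import all_boot all_classical all_reals topology.
Local Open Scope classical_set_scope.

Theorem proposition4p10 (X Y : topologicalType) (f : X -> Y) :
  open_map f -> SCstar_irresolute f -> bijective f ->
  forall I : set Y, gSCstar_closed I -> gSCstar_closed (f @^-1` I).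
Proof.
move=> fo firr [g fg gf] I hI U sU oU x hx.
apply: contrapT => xU.
have sI : I `<=` f @` U.
  move=> y Iy; exists (g y); last by rewrite gf.
  by apply: sU; change (I (f (g y))); rewrite gf.
have hcl := hI _ sI (fo _ oU).
have nfx : ~ (f @` U) (f x).
  by move=> [u Uu /(congr1 g)]; rewrite !fg => ux; apply: xU; rewrite -ux.
have H : ~ SCstar_cl I (f x) by move=> H1; apply: nfx; apply: hcl.
apply: H => F [cF IF].
have cpre : SCstar_closed (f @^-1` F).
  have := firr (~` F); rewrite /SCstar_open setCK => /(_ cF).
  by rewrite preimage_setC setCK.
exact: (hx _ (conj cpre (fun z (Iz : I (f z)) => IF _ Iz))).
Qed.
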